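(* Let $p$ be a prime, $n=n_1n_2$, $d$ a divisor of $n$ with $1<d<n$, $Q=p^n$, $m\ge0$ an integer and $N=n_1(m+1)$. Let $h\in\mathbb{Z}[y]$ be monic of degree $n_1$, and let $f\in\mathbb{Z}[y][x]$ be monic in $x$ of degree $\deg_x f$, with $\deg_y f\le n_1-1$. Then there is a constant $K>0$ depending only on $n_1$, $m$, $\deg_x f$ and $\|h\|_\infty$ such that every $P\in\mathbb{Z}[x,y]$ with $\deg_xP\le m$, $\deg_yP\le n_1-1$ and $\|P\|_\infty\le 2^{(N-1)/4}p^{(n-d)/N}$ satisfies $$\bigl|\mathrm{Res}_y\bigl(\mathrm{Res}_x(P,f),h\bigr)\bigr|\le K\,Q^{(1-\frac dn)\frac{\deg_x f}{m+1}}\,\|f\|_\infty^{\,n_1 m}.$$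
   Context: $\mathrm{Res}_x$ (resp. $\mathrm{Res}_y$) denotes the resultant with respect to the variable $x$ (resp. $y$); the quantity $\mathrm{Res}_y(\mathrm{Res}_x(P,f),h)$ is called the pseudonorm of $P$. For a polynomial with integer coefficients (in one or several variables), $\|\cdot\|_\infty$ is the maximum absolute value of its coefficients. *)

(* Defs.v *)
From HB Require Import structures.
From Stdlib Require Import Reals.
From mathcomp Require Import all_boot all_order all_algebra.

Set Implicit Arguments.
Unset Strict Implicit.
Unset Printing Implicit Defensive.

Import GRing.Theory Num.Theory.

(* Bivariate integer polynomials: Z[y][x] = {poly {poly int}};
   the outer variable is x, the inner (coefficient) variable is y. *)
Notation bipoly := {poly {poly int}}.

Definition norm1 (h : {poly int}) : nat :=
  \max_(i < size h) absz (h`_i)%R.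

Definition norm2 (P : bipoly) : nat :=
  \max_(i < size P) norm1 (P`_i)%R.

Definition degx (P : bipoly) : nat := (size P).-1.
Definition degy (P : bipoly) : nat := \max_(i < size P) (size (P`_i)%R).-1.

Definition Res_x (P f : bipoly) : {poly int} := resultant P f.
Definition Res_y (g h : {poly int}) : int := resultant g h.

Definition int2R (z : int) : R :=
  match z with
  | Posz n => INR n
  | Negz n => Ropp (INR n.+1)
  end.
Delimit Scope R_scope with Re.

(* Main.v *)
Require Import Defs.
From HB Require Import structures.
From Stdlib Require Import Reals Lra.
From mathcomp Require Import all_boot all_order all_algebra.
From mathcomp Require Import perm.
From mathcomp Require Import zify.
Import Order.TTheory GRing.Theory Num.Theory.
Local Open Scope ring_scope.

Definition nu_ok (R : comNzRingType) (nu : R -> int) :=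
  (forall x, 0 <= nu x) /\ (nu 0 = 0) /\ (nu 1 <= 1) /\ (forall x, nu (- x) = nu x) /\
      (forall x y, nu (x + y) <= nu x + nu y) /\ (forall x y, nu (x * y) <= nu x * nu y).
Arguments nu_ok {R}.

Lemma nu_sum (R : comNzRingType) (nu : R -> int) : nu_ok nu ->
  forall (I : Type) (r : seq I) (P : pred I) (F : I -> R),
  nu (\sum_(i <- r | P i) F i) <= \sum_(i <- r | P i) nu (F i).
Proof.
case=> nu_ge0 [nu0 [nu1 [nuN [nuD nuM]]]] I r P F.
elim/big_rec2: _ => [|i y x _ IH]; first by rewrite nu0.
by rewrite (le_trans (nuD _ _)) // lerD2l.
Qed.

Lemma nu_prod (R : comNzRingType) (nu : R -> int) : nu_ok nu ->
  forall (I : Type) (r : seq I) (P : pred I) (F : I -> R),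
  nu (\prod_(i <- r | P i) F i) <= \prod_(i <- r | P i) nu (F i).
Proof.
case=> nu_ge0 [nu0 [nu1 [nuN [nuD nuM]]]] I r P F.
elim/big_rec2: _ => [|i y x _ IH]; first by [].
by rewrite (le_trans (nuM _ _)) // ler_wpM2l.
Qed.

Lemma det_bound (R : comNzRingType) (nu : R -> int) : nu_ok nu ->
  forall k (A : 'M[R]_k) (B : 'I_k -> int),
  (forall i j, nu (A i j) <= B i) ->
  nu (\det A) <= (k`!)%:R * \prod_i B i.
Proof.
move=> Hnu; have [nu_ge0 [nu0 [nu1 [nuN [nuD nuM]]]]] := Hnu.
move=> k A B HB; rewrite /determinant.
apply: le_trans (@nu_sum _ _ Hnu _ _ _ _) _.
apply: le_trans (_ : \sum_(s : {perm 'I_k}) \prod_i B i <= _).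
  apply: ler_sum => s _.
  have -> : nu ((-1) ^+ s * \prod_i A i (s i)) = nu (\prod_i A i (s i)).
    by case: (odd_perm s); rewrite ?expr1 ?expr0 ?mul1r ?mulN1r ?nuN.
  apply: le_trans (@nu_prod _ _ Hnu _ _ _ _) _.
  apply: ler_prod => i _; rewrite nu_ge0 /=; exact: HB.
rewrite sumr_const card_Sn mulr_natl //.
Qed.

Lemma resultant_bound (R : comNzRingType) (nu : R -> int) : nu_ok nu ->
  forall (p q : {poly R}) (Mp Mq : int),
  (forall i, nu p`_i <= Mp) -> (forall i, nu q`_i <= Mq) ->
  nu (resultant p q) <= (((size q).-1 + (size p).-1)`!)%:R * (Mp ^+ (size q).-1 * Mq ^+ (size p).-1).
Proof.
move=> Hnu; have [nu_ge0 [nu0 [nu1 [nuN [nuD nuM]]]]] := Hnu.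
move=> p q Mp Mq Hp Hq; rewrite /resultant.
pose B (i : 'I_((size q).-1 + (size p).-1)) := match split i with inl _ => Mp | inr _ => Mq end.
apply: le_trans (@det_bound _ _ Hnu _ _ B _) _.
  move=> i j; rewrite Sylvester_mxE /B; case: split => k.
    case: leqP => _; rewrite ?mulr1n ?mulr0n ?nu0 //; exact: le_trans (nu_ge0 _) (Hp 0%N).
  case: leqP => _; rewrite ?mulr1n ?mulr0n ?nu0 //; exact: le_trans (nu_ge0 _) (Hq 0%N).
have E1 : \prod_(i < (size q).-1) B (lshift _ i) = Mp ^+ (size q).-1.
  rewrite -[in RHS](card_ord (size q).-1) -prodr_const; apply: eq_bigr => i _.
  by rewrite /B (unsplitK (inl _) : split (lshift _ _) = inl _).
have E2 : \prod_(i < (size p).-1) B (rshift _ i) = Mq ^+ (size p).-1.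
  rewrite -[in RHS](card_ord (size p).-1) -prodr_const; apply: eq_bigr => i _.
  by rewrite /B (unsplitK (inr _) : split (rshift _ _) = inr _).
by rewrite big_split_ord /= E1 E2.
Qed.
Definition L1 (a : {poly int}) : int := \sum_(i < size a) `|a`_i|.

Lemma sum_widen (F : nat -> int) k n : (k <= n)%N -> (forall i, (k <= i)%N -> F i = 0) ->
  \sum_(i < k) F i = \sum_(i < n) F i.
Proof.
move=> H H0; rewrite -(big_mkord xpredT F) -(big_mkord xpredT F).
rewrite (big_cat_nat (leq0n _) H) /= [X in _ = _ + X]big_nat_cond [X in _ = _ + X]big1 ?addr0 //.
by move=> i /andP[/andP[Hi _] _]; rewrite H0.
Qed.

Lemma L1_widen (a : {poly int}) n : (size a <= n)%N -> L1 a = \sum_(i < n) `|a`_i|.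
Proof.
move=> H; rewrite /L1 (@sum_widen (fun i => `|a`_i|) _ n) // => i Hi.
by rewrite nth_default ?normr0.
Qed.

Lemma horner1_widen (A : {poly int}) n : (size A <= n)%N -> A.[1] = \sum_(i < n) A`_i.
Proof.
move=> H; rewrite horner_coef.
under eq_bigr do rewrite expr1n mulr1.
rewrite (@sum_widen (fun i => A`_i) _ n) // => i Hi.
by rewrite nth_default.
Qed.

Lemma L1_ge0 (a : {poly int}) : 0 <= L1 a.
Proof. by apply: sumr_ge0 => i _. Qed.

Lemma L1_0 : L1 0 = 0.
Proof. by rewrite /L1 size_poly0 big_ord0. Qed.

Lemma L1_1 : L1 1 <= 1.
Proof. by rewrite /L1 size_poly1 big_ord1 coefC /=. Qed.

Lemma L1_N (a : {poly int}) : L1 (- a) = L1 a.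
Proof. by rewrite /L1 size_polyN; apply: eq_bigr => i _; rewrite coefN normrN. Qed.

Lemma L1_D (a b : {poly int}) : L1 (a + b) <= L1 a + L1 b.
Proof.
set n := maxn (size a) (size b).
rewrite (@L1_widen _ n) ?size_polyD // (@L1_widen a n) ?leq_maxl // (@L1_widen b n) ?leq_maxr //.
rewrite -big_split /=; apply: ler_sum => i _; rewrite coefD; exact: ler_normD.
Qed.

Lemma L1_M (a b : {poly int}) : L1 (a * b) <= L1 a * L1 b.
Proof.
pose A := \poly_(i < size a) `|a`_i|.
pose B := \poly_(i < size b) `|b`_i|.
have cA i : A`_i = `|a`_i|.
  by rewrite coef_poly; case: ltnP => // H; rewrite nth_default ?normr0.
have cB i : B`_i = `|b`_i|.
  by rewrite coef_poly; case: ltnP => // H; rewrite nth_default ?normr0.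
have hA : L1 a = A.[1].
  rewrite (@L1_widen a (size a + size A)) ?leq_addr // (@horner1_widen A (size a + size A)) ?leq_addl //.
  by apply: eq_bigr => i _; rewrite cA.
have hB : L1 b = B.[1].
  rewrite (@L1_widen b (size b + size B)) ?leq_addr // (@horner1_widen B (size b + size B)) ?leq_addl //.
  by apply: eq_bigr => i _; rewrite cB.
rewrite hA hB -hornerM.
set n := (size (a * b)%R + size (A * B)%R)%N.
rewrite (@L1_widen _ n) ?leq_addr // (@horner1_widen _ n) ?leq_addl //.
apply: ler_sum => i _; rewrite !coefM.
apply: le_trans (ler_norm_sum _ _ _) _.
by apply: ler_sum => j _; rewrite normrM cA cB.
Qed.

Definition nus (a : {poly int}) : int := ((if a == 0%R then 0 else 2 ^ (size a).-1)%N)%:Z.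

Lemma nus_ge0 a : 0 <= nus a. Proof. by []. Qed.
Lemma nus0 : nus 0 = 0. Proof. by rewrite /nus eqxx. Qed.
Lemma nus1 : nus 1 <= 1. Proof. by rewrite /nus oner_eq0 size_poly1. Qed.
Lemma nusN a : nus (- a) = nus a. Proof. by rewrite /nus oppr_eq0 size_polyN. Qed.
Lemma nusD a b : nus (a + b) <= nus a + nus b.
Proof.
rewrite /nus; have [->|a0] := eqVneq a 0; first by rewrite add0r.
have [->|b0] := eqVneq b 0; first by rewrite addr0; case: eqP => _; rewrite ?addr0.
case: eqP => // _; rewrite -PoszD lez_nat.
have H : ((size (a + b)%R).-1 <= maxn (size a).-1 (size b).-1)%N.
  have := size_polyD a b; lia.
apply: leq_trans (leq_pexp2l _ H) _ => //.
by rewrite /maxn; case: ifP => _; [apply: leq_addl | apply: leq_addr].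
Qed.

Lemma nusM a b : nus (a * b) <= nus a * nus b.
Proof.
rewrite /nus; have [->|a0] := eqVneq a 0; first by rewrite mul0r eqxx.
have [->|b0] := eqVneq b 0; first by rewrite mulr0 eqxx.
case: eqP => // _; rewrite -PoszM lez_nat -expnD leq_pexp2l //.
have := size_polyMleq a b.
have : (0 < size a)%N by rewrite size_poly_gt0.
have : (0 < size b)%N by rewrite size_poly_gt0.
lia.
Qed.

Lemma nus_size (a : {poly int}) : ((size a).-1 <= absz (nus a))%N.
Proof.
rewrite /nus; case: eqP => [->|_]; first by rewrite size_poly0.
exact: ltnW (ltn_expl _ _).
Qed.
Lemma coefy_size (P : bipoly) k i : (degy P <= k.-1)%N -> (0 < k)%N -> (size (P`_i)%R <= k)%N.
Proof.
move=> H k0; case: (ltnP i (size P)) => Hi; last by rewrite nth_default // size_poly0.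
have := @leq_bigmax 'I_(size P) (fun j => (size P`_j).-1) (Ordinal Hi).
rewrite -/(degy P) /= => H2; lia.
Qed.

Lemma coef_norm1 (c : {poly int}) j : (absz (c`_j)%R <= norm1 c)%N.
Proof.
case: (ltnP j (size c)) => Hj; last by rewrite nth_default // size_poly0.
exact: (@leq_bigmax 'I_(size c) (fun j => absz c`_j) (Ordinal Hj)).
Qed.

Lemma coef_norm2 (P : bipoly) i : (norm1 (P`_i)%R <= norm2 P)%N.
Proof.
case: (ltnP i (size P)) => Hi; last first.
  rewrite nth_default // /norm1 size_poly0 big_ord0 //.
exact: (@leq_bigmax 'I_(size P) (fun j => norm1 P`_j) (Ordinal Hi)).
Qed.

Lemma norm2_monic (f : bipoly) : f \is monic -> (1 <= norm2 f)%N.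
Proof.
move=> fm; apply: leq_trans (coef_norm2 f (size f).-1).
have -> : f`_(size f).-1 = 1 by move/monicP: fm.
by rewrite /norm1 size_poly1 big_ord1 coefC.
Qed.

Lemma L1_ok : nu_ok L1.
Proof. by split; [exact: L1_ge0|split; [exact: L1_0|split; [exact: L1_1|split; [exact: L1_N|split; [exact: L1_D|exact: L1_M]]]]]. Qed.

Lemma nus_ok : nu_ok nus.
Proof. by split; [exact: nus_ge0|split; [exact: nus0|split; [exact: nus1|split; [exact: nusN|split; [exact: nusD|exact: nusM]]]]]. Qed.

Lemma normr_ok : nu_ok (fun x : int => `|x|).
Proof.
split; [exact: normr_ge0|split; [exact: normr0|split; [by rewrite normr1|split; [exact: normrN|split; [exact: ler_normD|]]]]].
by move=> x y; rewrite normrM.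
Qed.

Lemma PoszX (a b : nat) : Posz (a ^ b) = (Posz a) ^+ b.
Proof. by rewrite -!natz natrX. Qed.

Lemma leq_expl (x y e : nat) : (x <= y)%N -> (x ^ e <= y ^ e)%N.
Proof. by move=> H; elim: e => [|e IH] //; rewrite !expnS leq_mul. Qed.

Lemma L1_coef (P : bipoly) n1 i : (degy P <= n1.-1)%N -> (0 < n1)%N ->
  L1 P`_i <= Posz (n1 * norm2 P).
Proof.
move=> Hd n0; rewrite (@L1_widen _ n1) ?coefy_size //.
apply: le_trans (_ : \sum_(j < n1) Posz (norm2 P) <= _).
  apply: ler_sum => j _; rewrite -abszE lez_nat.
  exact: leq_trans (coef_norm1 _ _) (coef_norm2 _ _).
by rewrite sumr_const card_ord -mulr_natl natz PoszM.
Qed.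

Lemma nus_coef (P : bipoly) n1 i : (degy P <= n1.-1)%N -> (0 < n1)%N ->
  nus P`_i <= Posz (2 ^ n1.-1).
Proof.
move=> Hd n0; rewrite /nus; case: eqP => _; rewrite lez_nat //.
apply: leq_pexp2l => //; have := @coefy_size _ _ i Hd n0; lia.
Qed.

Lemma absg_L1 (g : {poly int}) i : `|g`_i| <= L1 g.
Proof.
case: (ltnP i (size g)) => Hi; last by rewrite nth_default // normr0 L1_ge0.
rewrite /L1 (bigD1 (Ordinal Hi)) //= lerDl.
by apply: sumr_ge0 => j _.
Qed.

Definition Sbd n1 m degf := ((degf + m)`! * (2 ^ n1.-1) ^ (degf + m))%N.
Definition Cst n1 m degf Hnorm :=
  ((n1 + Sbd n1 m degf)`! * ((degf + m)`! * n1 ^ degf * n1 ^ m) ^ n1 * Hnorm.+1 ^ Sbd n1 m degf)%N.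

Lemma key n1 m degf Hnorm (h : {poly int}) (f P : bipoly) :
  (0 < n1)%N -> size h = n1.+1 -> norm1 h = Hnorm -> f \is monic -> degx f = degf ->
  (degy f <= n1.-1)%N -> (degx P <= m)%N -> (degy P <= n1.-1)%N ->
  (absz (Res_y (Res_x P f) h) <= Cst n1 m degf Hnorm * norm2 P ^ (degf * n1) * norm2 f ^ (n1 * m))%N.
Proof.
move=> n0 sh hn fm df dyf dxP dyP.
rewrite /Res_y /Res_x; set g := resultant P f.
have sf : (size f).-1 = degf by [].
have sP : ((size P).-1 <= m)%N by [].
set sP' := (size P).-1 in sP.
have HL := @resultant_bound _ _ L1_ok P f _ _ (fun i => @L1_coef _ _ i dyP n0) (fun i => @L1_coef _ _ i dyf n0).
rewrite -/g sf -/sP' -!PoszX -PoszM natz -PoszM in HL.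
have [l Hl] : exists l : nat, L1 g = Posz l by exists (absz (L1 g)); rewrite abszE ger0_norm ?L1_ge0.
rewrite Hl lez_nat in HL.
have HS := @resultant_bound _ _ nus_ok P f _ _ (fun i => @nus_coef _ _ i dyP n0) (fun i => @nus_coef _ _ i dyf n0).
rewrite -/g sf -/sP' -!PoszX -PoszM natz -PoszM in HS.
have Sg : ((size g).-1 <= Sbd n1 m degf)%N.
  apply: leq_trans (nus_size g) _.
  have -> : absz (nus g) = (if g == 0%R then 0 else 2 ^ (size g).-1)%N by [].
  move: HS; rewrite /nus lez_nat => HS; apply: leq_trans HS _.
  rewrite /Sbd -expnD leq_mul ?leq_fact ?leq_add2l //.
  by apply: leq_pexp2l; rewrite ?expn_gt0 ?leq_add2l.
have Hh : forall i, `|h`_i| <= Posz Hnorm.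
  by move=> i; rewrite -abszE lez_nat -hn coef_norm1.
have HR := @resultant_bound _ _ normr_ok g h (L1 g) (Posz Hnorm) (absg_L1 g) Hh.
rewrite sh /= Hl -!PoszX -PoszM natz -PoszM -abszE lez_nat in HR.
apply: leq_trans HR _.
set S := Sbd n1 m degf in Sg *; set sg := (size g).-1 in Sg *.
have nf1 := @norm2_monic f fm.
apply: (@leq_trans ((n1 + S)`! * (((degf + m)`! * (n1 ^ degf * norm2 P ^ degf) * (n1 ^ m * norm2 f ^ m)) ^ n1 * Hnorm.+1 ^ S))).
  apply: leq_mul; first by apply: leq_fact; rewrite leq_add2l.
  apply: leq_mul.
    apply: leq_expl; apply: leq_trans HL _.
    rewrite -mulnA; apply: leq_mul; first by apply: leq_fact; rewrite leq_add2l.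
    rewrite -!expnMn; apply: leq_mul => //.
    by apply: leq_pexp2l => //; rewrite muln_gt0 n0.
  apply: leq_trans (@leq_expl _ _ sg (leqnSn Hnorm)) _.
  by apply: leq_pexp2l.
rewrite /Cst -/S !expnMn -!expnM.
set A := ((degf + m)`! ^ n1)%N.
set B := ((n1 ^ degf) ^ n1)%N.
set C := ((n1 ^ m) ^ n1)%N.
set D := (Hnorm.+1 ^ S)%N.
set F := (n1 + S)`!.
rewrite (mulnC m n1).
set X := (norm2 P ^ (degf * n1))%N.
set Y := (norm2 f ^ (n1 * m))%N.
rewrite leq_eqVlt; apply/orP; left; apply/eqP; lia.
Qed.

Lemma INR_muln a b : INR (a * b)%N = (INR a * INR b)%Re.
Proof. by rewrite -mult_INR. Qed.

Lemma INR_expn a e : INR (a ^ e)%N = (INR a ^ e)%Re.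
Proof. by elim: e => [|e IH] //=; rewrite expnS INR_muln IH. Qed.

Lemma Rabs_int2R z : Rabs (int2R z) = INR (absz z).
Proof.
case: z => n; rewrite /int2R.
  rewrite Rabs_pos_eq; [by [] | exact: pos_INR].
rewrite Rabs_Ropp Rabs_pos_eq; [by [] | exact: pos_INR].
Qed.

Lemma Rpower_gt0 x y : (0 < Rpower x y)%Re.
Proof. exact: exp_pos. Qed.

Lemma Rpower_powR x y k : (Rpower x y ^ k)%Re = Rpower x (y * INR k).
Proof. by rewrite -Rpower_pow ?Rpower_mult //; apply: Rpower_gt0. Qed.

Theorem mainTheorem4 :
  forall (n1 m degf Hnorm : nat),
  exists K : R, (0 < K)%Re /\
  forall (p n2 d : nat) (h : {poly int}) (f : {poly {poly int}}),
    prime p ->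
    let n := (n1 * n2)%N in
    (d %| n)%N -> (1 < d)%N -> (d < n)%N ->
    let Q := (p ^ n)%N in
    let N := (n1 * m.+1)%N in
    h \is monic -> size h = n1.+1 -> norm1 h = Hnorm ->
    f \is monic -> degx f = degf -> (degy f <= n1.-1)%N ->
    forall P : {poly {poly int}},
      (degx P <= m)%N -> (degy P <= n1.-1)%N ->
      (INR (norm2 P) <=
         Rpower 2 ((INR N - 1) / 4) * Rpower (INR p) ((INR n - INR d) / INR N))%Re ->
      (Rabs (int2R (Res_y (Res_x P f) h)) <=
         K * Rpower (INR Q) ((1 - INR d / INR n) * INR degf / INR m.+1)
           * INR (norm2 f) ^ (n1 * m))%Re.
Proof.
move=> n1 m degf Hnorm.
set C := Cst n1 m degf Hnorm.
set a := ((INR (n1 * m.+1) - 1) / 4)%Re.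
exists ((INR C + 1) * Rpower 2 (a * INR (degf * n1)))%Re.
split.
  apply: Rmult_lt_0_compat; last exact: Rpower_gt0.
  have := pos_INR C; lra.
move=> p n2 d h f Hp n Hdn Hd1 Hdn2 Q N hm hs hn fm df dyf P dxP dyP HP.
have n0 : (0 < n1)%N by move: Hdn2; rewrite /n; case: (n1) => //; rewrite mul0n.
have n20 : (0 < n2)%N by move: Hdn2; rewrite /n; case: (n2) => //; rewrite muln0.
have p0 : (0 < INR p)%Re by apply: lt_0_INR; have := prime_gt0 Hp; lia.
have Hk := @key n1 m degf Hnorm h f P n0 hs hn fm df dyf dxP dyP.
rewrite Rabs_int2R.
rewrite -/C in Hk; clearbody C.
have HkR := le_INR _ _ (elimT ssrnat.leP Hk).
rewrite !INR_muln !INR_expn in HkR.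
set X := Rpower 2 (a * INR (degf * n1)).
set b := ((INR n - INR d) / INR N)%Re in HP.
set e := ((1 - INR d / INR n) * INR degf / INR m.+1)%Re.
set Y := Rpower (INR Q) e.
set Z := (INR (norm2 f) ^ (n1 * m))%Re in HkR *.
have HPk : (INR (norm2 P) ^ (degf * n1) <= X * Y)%Re.
  apply: Rle_trans (pow_incr _ _ _ (conj (pos_INR _) HP)) _.
  rewrite Rpow_mult_distr !Rpower_powR.
  have -> : Y = Rpower (INR p) (b * INR (degf * n1)).
    rewrite /Y /Q INR_expn -Rpower_pow // Rpower_mult; congr Rpower.
    rewrite /b /e /N /n !INR_muln S_INR.
    have : INR n1 <> 0%Re by apply: not_0_INR; lia.
    have : INR n2 <> 0%Re by apply: not_0_INR; lia.
    have := pos_INR m.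
    move=> Hm H2 H1; field; split => //; lra.
  by rewrite /X /a; apply: Rle_refl.
have Z0 : (0 <= Z)%Re by apply: pow_le; apply: pos_INR.
have C0 : (0 <= INR C)%Re by apply: pos_INR.
have X0 : (0 < X)%Re by apply: Rpower_gt0.
have Y0 : (0 < Y)%Re by apply: Rpower_gt0.
set NP := (INR (norm2 P) ^ (degf * n1))%Re in HkR HPk.
apply: Rle_trans HkR _.
have h1 : (INR C * NP * Z <= INR C * (X * Y) * Z)%Re.
  apply: Rmult_le_compat_r => //; apply: Rmult_le_compat_l => //.
have h2 : (INR C * (X * Y) * Z <= (INR C + 1) * X * Y * Z)%Re.
  have : (0 <= X * Y * Z)%Re by apply: Rmult_le_pos => //; apply: Rmult_le_pos; lra.
  nra.
lra.
Qed.
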